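(* Let $0<\alpha<1$, $T>0$, $M\ge 2$ an integer, $\tau=T/M$, $t_j=j\tau$ ($j=0,1,\dots,M$), and let $u\in\mathcal{C}^3[0,T]$. Then for every $j=1,2,\dots,M-1$, $$\left|\partial_{0t_{j+1}}^{\alpha}u-\Delta_{0t_{j+1}}^{\alpha}u\right|=\mathcal{O}(\tau^{3-\alpha}),$$ i.e. $\left|\partial_{0t_{j+1}}^{\alpha}u-\Delta_{0t_{j+1}}^{\alpha}u\right|\le C\tau^{3-\alpha}$ with a constant $C$ depending only on $\alpha$ and $\max_{[0,T]}|u'''|$ (not on $\tau$ or $j$).
   Context: The Caputo derivative of order $\alpha\in(0,1)$ is $\partial_{0t}^{\alpha}u=\frac{1}{\Gamma(1-\alpha)}\int_0^t u'(\eta)(t-\eta)^{-\alpha}\,d\eta$. Set $u_{t,s}=(u(t_{s+1})-u(t_s))/\tau$, $a_l^{(\alpha)}=(l+1)^{1-\alpha}-l^{1-\alpha}$ and $b_l^{(\alpha)}=\frac{1}{2-\alpha}\left[(l+1)^{2-\alpha}-l^{2-\alpha}\right]-\frac12\left[(l+1)^{1-\alpha}+l^{1-\alpha}\right]$ for $l\ge0$. The L2 formula is $$\Delta_{0t_{j+1}}^{\alpha}u=\frac{\tau^{1-\alpha}}{\Gamma(2-\alpha)}\sum_{s=0}^{j}c_{j-s}^{(\alpha)}u_{t,s},$$ where the coefficients $c_s^{(\alpha)}$ (which depend on $j$) are: for $j=1$: $c_0^{(\alpha)}=a_0^{(\alpha)}+b_0^{(\alpha)}+b_1^{(\alpha)}$,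 $c_1^{(\alpha)}=a_1^{(\alpha)}-b_1^{(\alpha)}-b_0^{(\alpha)}$; for $j=2$: $c_0^{(\alpha)}=a_0^{(\alpha)}+b_0^{(\alpha)}$, $c_1^{(\alpha)}=a_1^{(\alpha)}+b_1^{(\alpha)}+b_2^{(\alpha)}-b_0^{(\alpha)}$, $c_2^{(\alpha)}=a_2^{(\alpha)}-b_2^{(\alpha)}-b_1^{(\alpha)}$; for $j\ge3$: $c_0^{(\alpha)}=a_0^{(\alpha)}+b_0^{(\alpha)}$, $c_s^{(\alpha)}=a_s^{(\alpha)}+b_s^{(\alpha)}-b_{s-1}^{(\alpha)}$ for $1\le s\le j-2$, $c_{j-1}^{(\alpha)}=a_{j-1}^{(\alpha)}+b_{j-1}^{(\alpha)}+b_j^{(\alpha)}-b_{j-2}^{(\alpha)}$, $c_j^{(\alpha)}=a_j^{(\alpha)}-b_j^{(\alpha)}-b_{j-1}^{(\alpha)}$. *)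

(* Defs.v *)
From Stdlib Require Import Reals.
From Coquelicot Require Import Coquelicot.
Open Scope R_scope.

Definition Gamma (s : R) : R :=
  RInt_gen (fun x => Rpower x (s - 1) * exp (- x)) (at_right 0) (Rbar_locally p_infty).

Definition caputo (alpha : R) (u : R -> R) (t : R) : R :=
  RInt_gen (fun eta => Derive u eta * Rpower (t - eta) (- alpha)) (at_point 0) (at_left t)
  / Gamma (1 - alpha).

(* x^p for x >= 0 and p > 0, with the convention 0^p = 0
   (Stdlib's Rpower 0 p = exp (p * ln 0) = 1, which is wrong here). *)
Definition rpow (x p : R) : R := if Rle_dec x 0 then 0 else Rpower x p.

Definition a_coef (alpha : R) (l : nat) : R :=
  rpow (INR l + 1) (1 - alpha) - rpow (INR l) (1 - alpha).

Definition b_coef (alpha : R) (l : nat) : R :=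
  / (2 - alpha) * (rpow (INR l + 1) (2 - alpha) - rpow (INR l) (2 - alpha))
  - / 2 * (rpow (INR l + 1) (1 - alpha) + rpow (INR l) (1 - alpha)).

Definition c_coef (alpha : R) (j s : nat) : R :=
  let a := a_coef alpha in let b := b_coef alpha in
  match j with
  | 0%nat => a 0%nat
  | 1%nat => if Nat.eqb s 0 then a 0%nat + b 0%nat + b 1%nat
             else a 1%nat - b 1%nat - b 0%nat
  | 2%nat => if Nat.eqb s 0 then a 0%nat + b 0%nat
             else if Nat.eqb s 1 then a 1%nat + b 1%nat + b 2%nat - b 0%nat
             else a 2%nat - b 2%nat - b 1%nat
  | _ => if Nat.eqb s 0 then a 0%nat + b 0%nat
         else if Nat.leb s (j - 2) then a s + b s - b (s - 1)%nat
         else if Nat.eqb s (j - 1) then a (j - 1)%nat + b (j - 1)%nat + b j - b (j - 2)%nat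
         else a j - b j - b (j - 1)%nat
  end.

Definition L2_formula (alpha tau : R) (u : R -> R) (j : nat) : R :=
  Rpower tau (1 - alpha) / Gamma (2 - alpha) *
  sum_f_R0 (fun s => c_coef alpha j (j - s)%nat *
                     ((u (INR (s + 1) * tau) - u (INR s * tau)) / tau)) j.

(* Main.v *)
Require Import Defs.
From Stdlib Require Import Reals Lra Lia.
From Coquelicot Require Import Coquelicot.
Open Scope R_scope.

Lemma Rpower_pos x p : 0 < Rpower x p.
Proof. unfold Rpower; apply exp_pos. Qed.

Lemma is_derive_Rpower_sub t q x : x < t ->
  is_derive (fun y => Rpower (t - y) q) x (- (q * Rpower (t - x) (q - 1))).
Proof.
  intro H.
  assert (H1 : is_derive (fun y => Rpower y q) (t - x) (q * Rpower (t - x) (q - 1))).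
  { apply is_derive_Reals, derivable_pt_lim_power; lra. }
  assert (H2 : is_derive (fun y => t - y) x (-1)).
  { auto_derive; auto; ring. }
  pose proof (is_derive_comp _ _ x _ _ H1 H2) as H3.
  replace (- (q * Rpower (t - x) (q - 1))) with (scal (-1) (q * Rpower (t - x) (q - 1))).
  exact H3.
  unfold scal; simpl; unfold mult; simpl; ring.
Qed.

Lemma ball_R (x e y : R) : ball x e y <-> Rabs (y - x) < e.
Proof. unfold ball; simpl; unfold AbsRing_ball, abs, minus, plus, opp; simpl. tauto. Qed.

Lemma cont_Rpower_sub t q x : x < t -> continuous (fun y => Rpower (t - y) q) x.
Proof.
  intro H. apply (@ex_derive_continuous R_AbsRing R_NormedModule). eexists. apply is_derive_Rpower_sub; auto.
Qed.

Lemma cont_Rpower x q : 0 < x -> continuous (fun y => Rpower y q) x.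
Proof.
  intro H. apply (@ex_derive_continuous R_AbsRing R_NormedModule). eexists. apply is_derive_Reals, derivable_pt_lim_power; auto.
Qed.

Lemma Rpower_succ y q : 0 < y -> Rpower y (q + 1) = y * Rpower y q.
Proof. intro H. rewrite Rpower_plus, Rpower_1 by auto. ring. Qed.

Lemma kern_mono t al x y : 0 <= al -> x <= y -> y < t ->
  Rpower (t - x) (- al) <= Rpower (t - y) (- al).
Proof.
  intros H0 H1 H2. rewrite !Rpower_Ropp.
  apply Rinv_le_contravar. apply Rpower_pos.
  apply Rle_Rpower_l; lra.
Qed.

Lemma kern_int t al a b : 0 < al < 1 -> a <= b -> b < t ->
  is_RInt (fun x => Rpower (t - x) (- al)) a b
    ((Rpower (t - a) (1 - al) - Rpower (t - b) (1 - al)) / (1 - al)).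
Proof.
  intros Hal Hab Hbt.
  set (F := fun y => - Rpower (t - y) (1 - al) / (1 - al)).
  replace ((Rpower (t - a) (1 - al) - Rpower (t - b) (1 - al)) / (1 - al))
    with (minus (F b) (F a)).
  2: { unfold F, minus, plus, opp; simpl. field. lra. }
  apply (@is_RInt_derive R_CompleteNormedModule).
  - intros x Hx. rewrite Rmin_left, Rmax_right in Hx by lra.
    unfold F.
    pose proof (is_derive_Rpower_sub t (1 - al) x ltac:(lra)) as D.
    assert (E : Rpower (t - x) (- al) = (- / (1 - al)) * (- ((1 - al) * Rpower (t - x) (1 - al - 1)))).
    { replace (1 - al - 1) with (- al) by ring. field. lra. }
    rewrite E. eapply is_derive_ext; [|apply (is_derive_scal _ x _ _ D)].
    intro y; simpl. unfold Rdiv. ring.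
  - intros x Hx. rewrite Rmin_left, Rmax_right in Hx by lra.
    apply cont_Rpower_sub; lra.
Qed.

Lemma is_derive_eq (f g : R -> R) x v w : is_derive g x w ->
  (forall y, g y = f y) -> w = v -> is_derive f x v.
Proof. intros H E1 E2. subst v. eapply is_derive_ext; [|exact H]. exact E1. Qed.

Definition PhiR (al t A D m x : R) : R :=
  - (A + D * (t - m)) * Rpower (t - x) (1 - al) / (1 - al)
  + D * Rpower (t - x) (2 - al) / (2 - al).

Lemma PhiR_derive al t A D m x : 0 < al < 1 -> x < t ->
  is_derive (PhiR al t A D m) x ((A + D * (x - m)) * Rpower (t - x) (- al)).
Proof.
  intros Hal Hx.
  pose proof (is_derive_Rpower_sub t (1 - al) x Hx) as D1.
  pose proof (is_derive_Rpower_sub t (2 - al) x Hx) as D2.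
  pose proof (is_derive_plus _ _ x _ _
     (is_derive_scal _ x (- (A + D * (t - m)) / (1 - al)) _ D1)
     (is_derive_scal _ x (D / (2 - al)) _ D2)) as D3.
  apply (is_derive_eq _ _ _ _ _ D3).
  - intro y; unfold PhiR; simpl. unfold plus; simpl. unfold Rdiv. ring.
  - unfold plus; simpl.
    replace (1 - al - 1) with (- al) by ring.
    replace (2 - al - 1) with ((- al) + 1) by ring.
    rewrite Rpower_succ by lra. field. lra.
Qed.

Lemma cont_mul (f g : R -> R) x : continuous f x -> continuous g x ->
  continuous (fun y => f y * g y) x.
Proof. intros H1 H2. apply (continuous_mult f g x H1 H2). Qed.

Lemma cont_plus (f g : R -> R) x : continuous f x -> continuous g x ->
  continuous (fun y => f y + g y) x.
Proof. intros H1 H2. apply (continuous_plus f g x H1 H2). Qed.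

Lemma cont_minus (f g : R -> R) x : continuous f x -> continuous g x ->
  continuous (fun y => f y - g y) x.
Proof. intros H1 H2. apply (continuous_minus f g x H1 H2). Qed.

Lemma cont_const (c : R) (x : R) : continuous (fun _ : R => c) x.
Proof. apply continuous_const. Qed.

Lemma cont_affine A D m x : continuous (fun y => A + D * (y - m)) x.
Proof.
  apply (@ex_derive_continuous R_AbsRing R_NormedModule). auto_derive; auto.
Qed.

Lemma PhiR_int al t A D m a b : 0 < al < 1 -> a <= b -> b < t ->
  is_RInt (fun x => (A + D * (x - m)) * Rpower (t - x) (- al)) a b
    (PhiR al t A D m b - PhiR al t A D m a).
Proof.
  intros Hal Hab Hbt.
  apply (@is_RInt_derive R_CompleteNormedModule (PhiR al t A D m)).
  - intros x Hx. rewrite Rmin_left, Rmax_right in Hx by lra.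
    apply PhiR_derive; lra.
  - intros x Hx. rewrite Rmin_left, Rmax_right in Hx by lra.
    apply cont_mul. apply cont_affine. apply cont_Rpower_sub; lra.
Qed.

Lemma Rpower_inv_pow e q : 0 < e -> 0 < q -> Rpower (Rpower e (/ q)) q = e.
Proof.
  intros He Hq. rewrite Rpower_mult. rewrite Rinv_l by lra. apply Rpower_1; auto.
Qed.

Lemma lim_left_bound (g : R -> R) t q c d : 0 < q -> 0 < d ->
  (forall b, t - d < b < t -> Rabs (g b) <= c * Rpower (t - b) q) ->
  filterlim g (at_left t) (locally 0).
Proof.
  intros Hq Hd H.
  apply filterlim_locally. intros eps.
  set (c' := Rabs c + 1).
  assert (Hc' : 0 < c') by (unfold c'; pose proof (Rabs_pos c); lra).
  set (r := Rpower (eps / 2 / c') (/ q)).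
  assert (Hr : 0 < r) by apply Rpower_pos.
  assert (Hr' : Rpower r q = eps / 2 / c').
  { apply Rpower_inv_pow; auto. apply Rdiv_lt_0_compat; auto.
    pose proof (cond_pos eps); lra. }
  exists (mkposreal _ (Rmin_pos _ _ Hr Hd)). intros y Hy Hyt.
  apply ball_R in Hy. change (Rabs (y - t) < Rmin r d) in Hy. apply ball_R.
  assert (Hy1 : y - t < 0) by lra.
  rewrite Rabs_left in Hy by lra.
  assert (Hm1 := Rmin_l r d). assert (Hm2 := Rmin_r r d).
  specialize (H y ltac:(lra)).
  assert (Hp : Rpower (t - y) q <= Rpower r q).
  { apply Rle_Rpower_l; lra. }
  assert (Hp0 : 0 < Rpower (t - y) q) by apply Rpower_pos.
  replace (g y - 0) with (g y) by ring.
  eapply Rle_lt_trans; [exact H|].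
  apply Rle_lt_trans with (c' * Rpower (t - y) q).
  { apply Rmult_le_compat_r; [lra|]. unfold c'. pose proof (Rle_abs c); lra. }
  apply Rle_lt_trans with (c' * Rpower r q).
  { apply Rmult_le_compat_l; lra. }
  rewrite Hr'. field_simplify; [|lra]. pose proof (cond_pos eps); lra.
Qed.

Lemma PhiR_lim al t A D m : 0 < al < 1 ->
  filterlim (PhiR al t A D m) (at_left t) (locally 0).
Proof.
  intros Hal.
  apply (lim_left_bound _ t (1 - al) (Rabs (A + D * (t - m)) / (1 - al) + Rabs D / (2 - al)) 1);
    [lra|lra|].
  intros b Hb.
  unfold PhiR.
  assert (E : Rpower (t - b) (2 - al) = (t - b) * Rpower (t - b) (1 - al)).
  { replace (2 - al) with ((1 - al) + 1) by ring. apply Rpower_succ; lra. }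
  rewrite E.
  assert (P := Rpower_pos (t - b) (1 - al)).
  set (p := Rpower (t - b) (1 - al)) in *.
  eapply Rle_trans; [apply Rabs_triang|].
  rewrite Rmult_plus_distr_r.
  apply Rplus_le_compat.
  - unfold Rdiv. rewrite !Rabs_mult, Rabs_Ropp.
    rewrite (Rabs_right p) by lra. rewrite (Rabs_right (/ (1 - al))).
    2: { apply Rle_ge, Rlt_le, Rinv_0_lt_compat; lra. }
    right; ring.
  - unfold Rdiv. rewrite !Rabs_mult.
    rewrite (Rabs_right p) by lra. rewrite (Rabs_right (/ (2 - al))).
    2: { apply Rle_ge, Rlt_le, Rinv_0_lt_compat; lra. }
    rewrite (Rabs_right (t - b)) by lra.
    assert (0 <= Rabs D * / (2 - al)).
    { apply Rmult_le_pos. apply Rabs_pos. apply Rlt_le, Rinv_0_lt_compat; lra. }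
    assert (0 <= Rabs D * / (2 - al) * p) by (apply Rmult_le_pos; lra).
    nra.
Qed.

Lemma cauchy_lim {T : Type} (F : (T -> Prop) -> Prop) {FF : ProperFilter F} (I : T -> R) :
  (forall eps, 0 < eps -> exists Q, F Q /\ forall x y, Q x -> Q y -> Rabs (I x - I y) < eps) ->
  exists L, filterlim I F (locally L).
Proof.
  intros HC.
  set (G := filtermap I F).
  assert (PG : ProperFilter G) by (apply filtermap_proper_filter; auto).
  assert (CG : cauchy G).
  { apply cauchy_distance; auto. intros eps.
    destruct (HC eps (cond_pos eps)) as [Q [HQ HQ2]].
    exists (fun v => exists x, Q x /\ v = I x). split.
    - unfold G, filtermap. apply filter_imp with Q; auto. intros x Hx; exists x; auto.
    - intros u v [x [Hx ->]] [y [Hy ->]]. apply ball_R.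
      rewrite Rabs_minus_sym. apply HQ2; auto. }
  exists (lim G).
  intros P [eps HP].
  pose proof (complete_cauchy G PG CG eps) as H.
  unfold G, filtermap in H. unfold filtermap.
  apply filter_imp with (2 := H). intros x Hx. apply HP. exact Hx.
Qed.

Lemma lim_bound {T : Type} (F : (T -> Prop) -> Prop) {FF : ProperFilter F} (f g : T -> R) L X B :
  filterlim f F (locally L) -> filterlim g F (locally 0) ->
  F (fun b => Rabs (f b - g b - X) <= B) -> Rabs (L - X) <= B.
Proof.
  intros Hf Hg HB.
  apply Rle_plus_epsilon. intros eps Heps.
  assert (He2 : 0 < eps / 2) by lra.
  pose proof (proj1 (filterlim_locally f L) Hf (mkposreal _ He2)) as H1.
  pose proof (proj1 (filterlim_locally g 0) Hg (mkposreal _ He2)) as H2.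
  destruct (filter_ex _ (filter_and _ _ HB (filter_and _ _ H1 H2))) as [x [Hx1 [Hx2 Hx3]]].
  apply ball_R in Hx2. apply ball_R in Hx3. change (Rabs (f x - L) < eps / 2) in Hx2. change (Rabs (g x - 0) < eps / 2) in Hx3.
  replace (L - X) with ((f x - g x - X) - (f x - L) + (g x - 0)) by ring.
  eapply Rle_trans; [apply Rabs_triang|].
  eapply Rle_trans; [apply Rplus_le_compat_r, Rabs_triang|].
  rewrite Rabs_Ropp. lra.
Qed.

Lemma ex_RInt_cont (f : R -> R) a b : a <= b -> (forall x, a <= x <= b -> continuous f x) ->
  ex_RInt f a b.
Proof.
  intros Hab H. apply (@ex_RInt_continuous R_CompleteNormedModule).
  intros z Hz. rewrite Rmin_left, Rmax_right in Hz by lra. auto.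
Qed.

Lemma int_bound_kern (f : R -> R) t al M b1 b2 : 0 < al < 1 -> b1 <= b2 -> b2 < t ->
  (forall x, b1 <= x <= b2 -> continuous f x) ->
  (forall x, b1 <= x <= b2 -> Rabs (f x) <= M * Rpower (t - x) (- al)) ->
  Rabs (RInt f b1 b2) <= M * ((Rpower (t - b1) (1 - al) - Rpower (t - b2) (1 - al)) / (1 - al)).
Proof.
  intros Hal Hb Hbt Hc HM.
  assert (Hex := ex_RInt_cont f b1 b2 Hb Hc).
  pose proof (RInt_correct f b1 b2 Hex) as H1.
  pose proof (is_RInt_scal _ _ _ M _ (kern_int t al b1 b2 Hal Hb Hbt)) as H2.
  exact (norm_RInt_le f (fun x => scal M (Rpower (t - x) (- al))) b1 b2 _ _ Hb HM H1 H2).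
Qed.

Lemma Rpm (a b : R) : a + b - a = b.
Proof. ring. Qed.
Lemma Rpm2 (a b : R) : a + b - b = a.
Proof. ring. Qed.

Lemma improper_left (f : R -> R) c t al M : 0 < al < 1 -> c < t -> 0 <= M ->
  (forall x, c <= x < t -> continuous f x) ->
  (forall x, c <= x < t -> Rabs (f x) <= M * Rpower (t - x) (- al)) ->
  exists L, filterlim (fun b => RInt f c b) (at_left t) (locally L).
Proof.
  intros Hal Hct HM Hc Hb.
  assert (key : forall b1 b2, c <= b1 <= b2 -> b2 < t ->
     Rabs (RInt f c b2 - RInt f c b1) <= M * Rpower (t - b1) (1 - al) / (1 - al)).
  { intros b1 b2 H1 H2.
    assert (E : RInt f c b2 = RInt f c b1 + RInt f b1 b2).
    { rewrite <- (RInt_Chasles f c b1 b2). reflexivity.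
      apply ex_RInt_cont; [lra|]. intros; apply Hc; lra.
      apply ex_RInt_cont; [lra|]. intros; apply Hc; lra. }
    rewrite E.
    rewrite (Rpm (RInt f c b1) (RInt f b1 b2)).
    eapply Rle_trans.
    { apply (int_bound_kern f t al M b1 b2); try lra.
      intros; apply Hc; lra. intros; apply Hb; lra. }
    assert (0 < Rpower (t - b2) (1 - al)) by apply Rpower_pos.
    unfold Rdiv. rewrite Rmult_assoc. apply Rmult_le_compat_l; auto.
    apply Rmult_le_compat_r. apply Rlt_le, Rinv_0_lt_compat; lra. lra. }
  apply cauchy_lim; [apply at_left_proper_filter|].
  intros eps Heps.
  set (r := Rpower (eps * (1 - al) / (2 * (M + 1))) (/ (1 - al))).
  assert (Hr : 0 < r) by apply Rpower_pos.
  assert (Hr' : Rpower r (1 - al) = eps * (1 - al) / (2 * (M + 1))).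
  { apply Rpower_inv_pow; [|lra]. apply Rdiv_lt_0_compat; [|lra]. apply Rmult_lt_0_compat; lra. }
  assert (Hd : 0 < Rmin r (t - c)) by (apply Rmin_pos; lra).
  exists (fun b => t - Rmin r (t - c) < b < t). split.
  - exists (mkposreal _ Hd). intros y Hy Hyt. apply ball_R in Hy.
    change (Rabs (y - t) < Rmin r (t - c)) in Hy.
    rewrite Rabs_left in Hy by lra. lra.
  - assert (main : forall x y, t - Rmin r (t - c) < x < t -> t - Rmin r (t - c) < y < t -> x <= y ->
       Rabs (RInt f c x - RInt f c y) < eps).
    { intros x y Hx Hy Hxy. rewrite Rabs_minus_sym.
      assert (Hm1 := Rmin_l r (t - c)). assert (Hm2 := Rmin_r r (t - c)).
      eapply Rle_lt_trans; [apply key; lra|].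
      assert (Hp : Rpower (t - x) (1 - al) <= Rpower r (1 - al)).
      { apply Rle_Rpower_l; lra. }
      apply Rle_lt_trans with (M * Rpower r (1 - al) / (1 - al)).
      { unfold Rdiv. apply Rmult_le_compat_r. apply Rlt_le, Rinv_0_lt_compat; lra.
        apply Rmult_le_compat_l; lra. }
      rewrite Hr'. field_simplify; [|lra].
      apply Rmult_lt_reg_r with (2 * M + 2); [lra|].
      field_simplify; [|lra]. nra. }
    intros x y Hx Hy. destruct (Rle_dec x y).
    + apply main; auto.
    + rewrite Rabs_minus_sym. apply main; auto; lra.
Qed.

Lemma pow_int al a b : 0 < al < 1 -> 0 < a -> a <= b ->
  is_RInt (fun x => Rpower x (- al)) a b
    ((Rpower b (1 - al) - Rpower a (1 - al)) / (1 - al)).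
Proof.
  intros Hal Ha Hab.
  set (F := fun y => Rpower y (1 - al) / (1 - al)).
  replace ((Rpower b (1 - al) - Rpower a (1 - al)) / (1 - al))
    with (minus (F b) (F a)).
  2: { unfold F, minus, plus, opp; simpl. field. lra. }
  apply (@is_RInt_derive R_CompleteNormedModule).
  - intros x Hx. rewrite Rmin_left, Rmax_right in Hx by lra.
    pose proof (proj2 (is_derive_Reals _ _ _) (derivable_pt_lim_power x (1 - al) ltac:(lra))) as D.
    apply (is_derive_eq _ _ _ _ _ (is_derive_scal _ x (/ (1 - al)) _ D)).
    + intro y; unfold F; simpl. unfold Rdiv. ring.
    + replace (1 - al - 1) with (- al) by ring. rewrite <- Rmult_assoc, Rinv_l by lra. apply Rmult_1_l.
  - intros x Hx. rewrite Rmin_left, Rmax_right in Hx by lra.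
    apply cont_Rpower; lra.
Qed.

Lemma improper_right0 (f : R -> R) c al M : 0 < al < 1 -> 0 < c -> 0 <= M ->
  (forall x, 0 < x <= c -> continuous f x) ->
  (forall x, 0 < x <= c -> Rabs (f x) <= M * Rpower x (- al)) ->
  exists L, filterlim (fun a => RInt f a c) (at_right 0) (locally L).
Proof.
  intros Hal Hc HM Hcont Hb.
  assert (key : forall a1 a2, 0 < a1 <= a2 -> a2 <= c ->
     Rabs (RInt f a1 c - RInt f a2 c) <= M * Rpower a2 (1 - al) / (1 - al)).
  { intros a1 a2 H1 H2.
    assert (E : RInt f a1 c = RInt f a1 a2 + RInt f a2 c).
    { rewrite <- (RInt_Chasles f a1 a2 c). reflexivity.
      apply ex_RInt_cont; [lra|]. intros; apply Hcont; lra.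
      apply ex_RInt_cont; [lra|]. intros; apply Hcont; lra. }
    rewrite E.
    rewrite (Rpm2 (RInt f a1 a2) (RInt f a2 c)).
    assert (Hex : ex_RInt f a1 a2) by (apply ex_RInt_cont; [lra|]; intros; apply Hcont; lra).
    pose proof (RInt_correct f a1 a2 Hex) as I1.
    pose proof (is_RInt_scal _ _ _ M _ (pow_int al a1 a2 Hal ltac:(lra) ltac:(lra))) as I2.
    eapply Rle_trans.
    { exact (norm_RInt_le f (fun x => scal M (Rpower x (- al))) a1 a2 _ _ (proj2 H1)
              (fun x Hx => Hb x ltac:(lra)) I1 I2). }
    change (scal M ((Rpower a2 (1 - al) - Rpower a1 (1 - al)) / (1 - al)))
      with (M * ((Rpower a2 (1 - al) - Rpower a1 (1 - al)) / (1 - al))).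
    assert (0 < Rpower a1 (1 - al)) by apply Rpower_pos.
    unfold Rdiv. rewrite <- Rmult_assoc. apply Rmult_le_compat_r.
    apply Rlt_le, Rinv_0_lt_compat; lra. nra. }
  apply cauchy_lim; [apply at_right_proper_filter|].
  intros eps Heps.
  set (r := Rpower (eps * (1 - al) / (2 * (M + 1))) (/ (1 - al))).
  assert (Hr : 0 < r) by apply Rpower_pos.
  assert (Hr' : Rpower r (1 - al) = eps * (1 - al) / (2 * (M + 1))).
  { apply Rpower_inv_pow; [|lra]. apply Rdiv_lt_0_compat; [|lra]. apply Rmult_lt_0_compat; lra. }
  assert (Hd : 0 < Rmin r c) by (apply Rmin_pos; lra).
  exists (fun a => 0 < a < Rmin r c). split.
  - exists (mkposreal _ Hd). intros y Hy Hyt. apply ball_R in Hy.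
    change (Rabs (y - 0) < Rmin r c) in Hy.
    rewrite Rminus_0_r, Rabs_right in Hy by lra. lra.
  - assert (main : forall x y, 0 < x < Rmin r c -> 0 < y < Rmin r c -> x <= y ->
       Rabs (RInt f x c - RInt f y c) < eps).
    { intros x y Hx Hy Hxy.
      assert (Hm1 := Rmin_l r c). assert (Hm2 := Rmin_r r c).
      eapply Rle_lt_trans; [apply key; lra|].
      assert (Hp : Rpower y (1 - al) <= Rpower r (1 - al)).
      { apply Rle_Rpower_l; lra. }
      apply Rle_lt_trans with (M * Rpower r (1 - al) / (1 - al)).
      { unfold Rdiv. apply Rmult_le_compat_r. apply Rlt_le, Rinv_0_lt_compat; lra.
        apply Rmult_le_compat_l; lra. }
      rewrite Hr'. field_simplify; [|lra].
      apply Rmult_lt_reg_r with (2 * M + 2); [lra|].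
      field_simplify; [|lra]. nra. }
    intros x y Hx Hy. destruct (Rle_dec x y).
    + apply main; auto.
    + rewrite Rabs_minus_sym. apply main; auto; lra.
Qed.

Lemma expm_int a b : a <= b -> is_RInt (fun x => exp (- x)) a b (exp (- a) - exp (- b)).
Proof.
  intros Hab.
  set (F := fun y => - exp (- y)).
  replace (exp (- a) - exp (- b)) with (minus (F b) (F a)).
  2: { unfold F, minus, plus, opp; simpl. ring. }
  apply (@is_RInt_derive R_CompleteNormedModule).
  - intros x Hx. unfold F. auto_derive; auto. ring.
  - intros x Hx. apply (@ex_derive_continuous R_AbsRing R_NormedModule). auto_derive; auto.
Qed.

Lemma improper_pinf (f : R -> R) c :
  (forall x, c <= x -> continuous f x) ->
  (forall x, c <= x -> Rabs (f x) <= exp (- x)) ->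
  exists L, filterlim (fun b => RInt f c b) (Rbar_locally p_infty) (locally L).
Proof.
  intros Hcont Hb.
  assert (key : forall b1 b2, c <= b1 <= b2 ->
     Rabs (RInt f c b2 - RInt f c b1) <= exp (- b1)).
  { intros b1 b2 H1.
    assert (E : RInt f c b2 = RInt f c b1 + RInt f b1 b2).
    { rewrite <- (RInt_Chasles f c b1 b2). reflexivity.
      apply ex_RInt_cont; [lra|]. intros; apply Hcont; lra.
      apply ex_RInt_cont; [lra|]. intros; apply Hcont; lra. }
    rewrite E. rewrite (Rpm (RInt f c b1) (RInt f b1 b2)).
    assert (Hex : ex_RInt f b1 b2) by (apply ex_RInt_cont; [lra|]; intros; apply Hcont; lra).
    pose proof (RInt_correct f b1 b2 Hex) as I1.
    pose proof (expm_int b1 b2 (proj2 H1)) as I2.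
    eapply Rle_trans.
    { exact (norm_RInt_le f (fun x => exp (- x)) b1 b2 _ _ (proj2 H1)
              (fun x Hx => Hb x ltac:(lra)) I1 I2). }
    pose proof (exp_pos (- b2)). lra. }
  apply cauchy_lim; [apply Rbar_locally_filter|].
  intros eps Heps.
  set (r := Rmax c (- ln (eps / 2))).
  exists (fun b => r < b). split.
  - exists r. auto.
  - assert (main : forall x y, r < x -> r < y -> x <= y ->
       Rabs (RInt f c x - RInt f c y) < eps).
    { intros x y Hx Hy Hxy. rewrite Rabs_minus_sym.
      assert (Hm1 := Rmax_l c (- ln (eps / 2))). assert (Hm2 := Rmax_r c (- ln (eps / 2))).
      eapply Rle_lt_trans; [apply key; unfold r in *; lra|].
      apply Rlt_le_trans with (exp (ln (eps / 2))).
      { apply exp_increasing. unfold r in *; lra. }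
      rewrite exp_ln by lra. lra. }
    intros x y Hx Hy. destruct (Rle_dec x y).
    + apply main; auto.
    + rewrite Rabs_minus_sym. apply main; auto; lra.
Qed.

Lemma gen_of_lim_l (F : (R -> Prop) -> Prop) {FF : Filter F} (f : R -> R) b l :
  F (fun a => ex_RInt f a b) -> filterlim (fun a => RInt f a b) F (locally l) ->
  is_RInt_gen f F (at_point b) l.
Proof.
  intros Hex Hl P HP.
  unfold filtermapi.
  apply (Filter_prod F (at_point b) _ (fun a => ex_RInt f a b /\ P (RInt f a b)) (fun y => y = b)).
  - apply filter_and; auto. apply Hl, HP.
  - unfold at_point; reflexivity.
  - intros a y [H1 H2] ->. exists (RInt f a b). split; auto.
    apply (@RInt_correct R_CompleteNormedModule); auto.
Qed.

Lemma gen_of_lim_r (G : (R -> Prop) -> Prop) {FG : Filter G} (f : R -> R) a l :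
  G (fun b => ex_RInt f a b) -> filterlim (fun b => RInt f a b) G (locally l) ->
  is_RInt_gen f (at_point a) G l.
Proof.
  intros Hex Hl P HP.
  unfold filtermapi.
  apply (Filter_prod (at_point a) G _ (fun y => y = a) (fun b => ex_RInt f a b /\ P (RInt f a b))).
  - unfold at_point; reflexivity.
  - apply filter_and; auto. apply Hl, HP.
  - intros y b -> [H1 H2]. exists (RInt f a b). split; auto.
    apply (@RInt_correct R_CompleteNormedModule); auto.
Qed.

Lemma lim_right0_bound (g : R -> R) q c d : 0 < q -> 0 < d ->
  (forall a, 0 < a < d -> Rabs (g a) <= c * Rpower a q) ->
  filterlim g (at_right 0) (locally 0).
Proof.
  intros Hq Hd H.
  apply filterlim_locally. intros eps.
  set (c' := Rabs c + 1).
  assert (Hc' : 0 < c') by (unfold c'; pose proof (Rabs_pos c); lra).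
  set (r := Rpower (eps / 2 / c') (/ q)).
  assert (Hr : 0 < r) by apply Rpower_pos.
  assert (Hr' : Rpower r q = eps / 2 / c').
  { apply Rpower_inv_pow; auto. apply Rdiv_lt_0_compat; auto.
    pose proof (cond_pos eps); lra. }
  exists (mkposreal _ (Rmin_pos _ _ Hr Hd)). intros y Hy Hyt.
  apply ball_R in Hy. change (Rabs (y - 0) < Rmin r d) in Hy. apply ball_R.
  rewrite Rminus_0_r, Rabs_right in Hy by lra.
  assert (Hm1 := Rmin_l r d). assert (Hm2 := Rmin_r r d).
  specialize (H y ltac:(lra)).
  assert (Hp : Rpower y q <= Rpower r q).
  { apply Rle_Rpower_l; lra. }
  assert (Hp0 : 0 < Rpower y q) by apply Rpower_pos.
  replace (g y - 0) with (g y) by ring.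
  eapply Rle_lt_trans; [exact H|].
  apply Rle_lt_trans with (c' * Rpower y q).
  { apply Rmult_le_compat_r; [lra|]. unfold c'. pose proof (Rle_abs c); lra. }
  apply Rle_lt_trans with (c' * Rpower r q).
  { apply Rmult_le_compat_l; lra. }
  rewrite Hr'. field_simplify; [|lra]. pose proof (cond_pos eps); lra.
Qed.

Lemma exp_big x : 0 < x -> x * exp (- x) <= 4 / x.
Proof.
  intros Hx.
  assert (E : exp x = exp (x / 2) * exp (x / 2)) by (rewrite <- exp_plus; f_equal; field).
  assert (H1 : 1 + x / 2 < exp (x / 2)) by (apply exp_ineq1; lra).
  assert (H2 : x * x / 4 <= exp x) by (rewrite E; nra).
  rewrite exp_Ropp.
  pose proof (exp_pos x).
  apply Rmult_le_reg_r with (exp x); auto.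
  field_simplify; try lra.
  apply Rmult_le_reg_r with x; auto. field_simplify; lra.
Qed.

Lemma Gamma_rel al : 0 < al < 1 -> Gamma (2 - al) = (1 - al) * Gamma (1 - al).
Proof.
  intros Hal.
  set (g1 := fun x => Rpower x (1 - al - 1) * exp (- x)).
  assert (Eg1 : forall x, g1 x = Rpower x (- al) * exp (- x)).
  { intro x; unfold g1; f_equal; f_equal; ring. }
  assert (Cg1 : forall x, 0 < x -> continuous g1 x).
  { intros x Hx. apply cont_mul. apply cont_Rpower; auto.
    apply (@ex_derive_continuous R_AbsRing R_NormedModule). auto_derive; auto. }
  destruct (improper_right0 g1 1 al 1 Hal ltac:(lra) ltac:(lra)) as [L1 HL1].
  { intros; apply Cg1; lra. }
  { intros x Hx. rewrite Eg1, Rabs_mult, Rmult_1_l.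
    rewrite (Rabs_right (Rpower x (- al))) by (apply Rle_ge, Rlt_le, Rpower_pos).
    rewrite (Rabs_right (exp (- x))) by (apply Rle_ge, Rlt_le, exp_pos).
    assert (exp (- x) <= 1) by (rewrite <- exp_0; apply exp_le_3 || (apply Rlt_le, exp_increasing; lra)).
    pose proof (Rpower_pos x (- al)). nra. }
  destruct (improper_pinf g1 1) as [L2 HL2].
  { intros; apply Cg1; lra. }
  { intros x Hx. rewrite Eg1, Rabs_mult.
    rewrite (Rabs_right (Rpower x (- al))) by (apply Rle_ge, Rlt_le, Rpower_pos).
    rewrite (Rabs_right (exp (- x))) by (apply Rle_ge, Rlt_le, exp_pos).
    assert (Rpower x (- al) <= 1).
    { rewrite Rpower_Ropp. rewrite <- Rinv_1. apply Rinv_le_contravar; [lra|].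
      rewrite <- (Rpower_O x) by lra. apply Rle_Rpower; lra. }
    pose proof (exp_pos (- x)). nra. }
  assert (G1 : is_RInt_gen g1 (at_right 0) (Rbar_locally p_infty) (L1 + L2)).
  { eapply (@is_RInt_gen_Chasles R_NormedModule _ _ _ _ g1 1 L1 L2).
    - apply gen_of_lim_l; auto. 1: typeclasses eauto.
      exists (mkposreal 1 Rlt_0_1). intros y Hy Hy0. apply ball_R in Hy.
      change (Rabs (y - 0) < 1) in Hy. rewrite Rminus_0_r, Rabs_right in Hy by lra.
      apply ex_RInt_cont; [lra|]. intros; apply Cg1; lra.
    - apply gen_of_lim_r; auto. 1: typeclasses eauto.
      exists 1. intros y Hy. apply ex_RInt_cont; [lra|]. intros; apply Cg1; lra. }
  set (F := fun x => - Rpower x (1 - al) * exp (- x)).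
  set (h := fun x => Rpower x (2 - al - 1) * exp (- x) - (1 - al) * g1 x).
  assert (DF : forall x, 0 < x -> is_derive F x (h x)).
  { intros x Hx.
    pose proof (proj2 (is_derive_Reals _ _ _) (derivable_pt_lim_power x (1 - al) Hx)) as D1.
    assert (D2 : is_derive (fun y => exp (- y)) x (- exp (- x))) by (auto_derive; auto; ring).
    pose proof (is_derive_mult _ _ x _ _ D1 D2 (fun u v => Rmult_comm u v)) as D3.
    apply (is_derive_eq _ _ _ _ _ (is_derive_opp _ x _ D3)).
    - intro y; unfold F; simpl. unfold opp, mult; simpl. ring.
    - unfold h, g1, opp, plus, mult; simpl.
      assert (E1 : Rpower x (1 - al) = x * Rpower x (1 - al - 1))
        by (rewrite <- Rpower_succ by lra; f_equal; ring).
      assert (E2 : Rpower x (2 - al - 1) = x * Rpower x (1 - al - 1))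
        by (rewrite <- Rpower_succ by lra; f_equal; ring).
      rewrite E1, E2. ring. }
  assert (Ch : forall x, 0 < x -> continuous h x).
  { intros x Hx. unfold h. apply cont_minus.
    apply cont_mul. apply cont_Rpower; auto.
    apply (@ex_derive_continuous R_AbsRing R_NormedModule). auto_derive; auto.
    apply (continuous_scal_r (1 - al) g1 x). apply Cg1; auto. }
  assert (HD : is_RInt_gen h (at_right 0) (Rbar_locally p_infty) (0 - 0)).
  { apply (is_RInt_gen_ext (Derive F)).
    - apply (Filter_prod _ _ _ (fun a => 0 < a) (fun b => 0 < b)).
      + exists (mkposreal 1 Rlt_0_1). intros; auto.
      + exists 0. auto.
      + intros a b Ha Hb x Hx. simpl in Hx.
        assert (0 < x) by (pose proof (Rmin_glb_lt a b 0); destruct (Rle_dec a b);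
           [rewrite Rmin_left in Hx by lra|rewrite Rmin_right in Hx by lra]; lra).
        apply is_derive_unique, DF; auto.
    - apply is_RInt_gen_Derive.
      + apply (Filter_prod _ _ _ (fun a => 0 < a) (fun b => 0 < b)).
        * exists (mkposreal 1 Rlt_0_1). intros; auto.
        * exists 0. auto.
        * intros a b Ha Hb x Hx. simpl in Hx.
          assert (0 < x) by (destruct (Rle_dec a b);
             [rewrite Rmin_left in Hx by lra|rewrite Rmin_right in Hx by lra]; lra).
          eexists; apply DF; auto.
      + apply (Filter_prod _ _ _ (fun a => 0 < a) (fun b => 0 < b)).
        * exists (mkposreal 1 Rlt_0_1). intros; auto.
        * exists 0. auto.
        * intros a b Ha Hb x Hx. simpl in Hx.
          assert (0 < x) by (destruct (Rle_dec a b);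
             [rewrite Rmin_left in Hx by lra|rewrite Rmin_right in Hx by lra]; lra).
          apply (continuous_ext_loc _ h). 2: apply Ch; auto.
          exists (mkposreal x H). intros y Hy. apply ball_R in Hy.
          change (Rabs (y - x) < x) in Hy.
          symmetry; apply is_derive_unique, DF. apply Rabs_def2 in Hy. lra.
      + apply (lim_right0_bound _ (1 - al) 1 1); try lra.
        intros a Ha. unfold F. rewrite Rabs_mult, Rabs_Ropp, Rmult_1_l.
        rewrite (Rabs_right (Rpower a (1 - al))) by (apply Rle_ge, Rlt_le, Rpower_pos).
        rewrite (Rabs_right (exp (- a))) by (apply Rle_ge, Rlt_le, exp_pos).
        assert (exp (- a) <= 1) by (rewrite <- exp_0; apply Rlt_le, exp_increasing; lra).
        pose proof (Rpower_pos a (1 - al)). nra.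
      + apply filterlim_locally. intros eps.
        exists (Rmax 1 (8 / eps)). intros x Hx.
        assert (Hm1 := Rmax_l 1 (8 / eps)). assert (Hm2 := Rmax_r 1 (8 / eps)).
        apply ball_R. unfold F. rewrite Rminus_0_r, Rabs_mult, Rabs_Ropp.
        rewrite (Rabs_right (Rpower x (1 - al))) by (apply Rle_ge, Rlt_le, Rpower_pos).
        rewrite (Rabs_right (exp (- x))) by (apply Rle_ge, Rlt_le, exp_pos).
        assert (Hp : Rpower x (1 - al) <= x).
        { rewrite <- (Rpower_1 x) at 2 by lra. apply Rle_Rpower; lra. }
        pose proof (exp_big x ltac:(lra)). pose proof (exp_pos (- x)).
        pose proof (cond_pos eps).
        apply Rle_lt_trans with (x * exp (- x)). nra.
        eapply Rle_lt_trans; [eassumption|].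
        apply Rmult_lt_reg_r with x; [lra|]. unfold Rdiv. rewrite Rmult_assoc, Rinv_l by lra.
        apply Rlt_le_trans with (eps * (8 / eps)). 
        { unfold Rdiv. rewrite <- Rmult_assoc, (Rmult_comm eps 8), Rmult_assoc, Rinv_r by lra. lra. }
        apply Rmult_le_compat_l; lra. }
  assert (G2 : is_RInt_gen (fun x => Rpower x (2 - al - 1) * exp (- x)) (at_right 0) (Rbar_locally p_infty)
                 ((1 - al) * (L1 + L2))).
  { pose proof (is_RInt_gen_plus _ _ _ _ HD (is_RInt_gen_scal _ (1 - al) _ G1)) as H.
    replace ((1 - al) * (L1 + L2)) with (plus (0 - 0) (scal (1 - al) (L1 + L2))).
    2: { unfold plus, scal; simpl; unfold mult; simpl; ring. }
    eapply is_RInt_gen_ext; [|exact H]. apply filter_forall. intros ab x _.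
    unfold h, plus, scal; simpl; unfold mult; simpl; ring. }
  unfold Gamma.
  rewrite (is_RInt_gen_unique _ _ G2).
  change (RInt_gen (fun x : R => Rpower x (1 - al - 1) * exp (- x)) (at_right 0) (Rbar_locally p_infty))
    with (RInt_gen g1 (at_right 0) (Rbar_locally p_infty)).
  rewrite (is_RInt_gen_unique _ _ G1). reflexivity.
Qed.

Definition Hyp3 (u : R -> R) (T K : R) : Prop :=
  (forall x, 0 <= x <= T -> forall k, (k <= 3)%nat -> ex_derive_n u k x) /\
  (forall x, 0 <= x <= T -> Rabs (Derive_n u 3 x) <= K).

Lemma taylor3 u T K p y : Hyp3 u T K -> 0 <= p -> p < y -> y <= T ->
  Rabs (u y - u p - (y - p) * Derive u p - (y - p) ^ 2 / 2 * Derive_n u 2 p)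
    <= K * (y - p) ^ 3 / 6.
Proof.
  intros [H1 H2] Hp Hpy HyT.
  destruct (Taylor_Lagrange u 2 p y Hpy) as [z [Hz E]].
  { intros t Ht k Hk. apply H1; [lra|lia]. }
  rewrite E. simpl sum_f_R0. simpl Derive_n.
  change (Derive (fun x => u x) p) with (Derive u p).
  change (Derive (fun x => Derive (fun x0 => u x0) x) p) with (Derive_n u 2 p).
  change (Derive (fun x => Derive (fun x0 => Derive (fun x1 => u x1) x0) x) z) with (Derive_n u 3 z).
  replace (INR (Factorial.fact 3)) with 6 by (simpl; lra).
  replace (INR (Factorial.fact 2)) with 2 by (simpl; lra).
  replace (INR (Factorial.fact 1)) with 1 by (simpl; lra).
  replace (INR (Factorial.fact 0)) with 1 by (simpl; lra).
  match goal with |- Rabs ?e <= _ => replace e with ((y - p) ^ 3 / 6 * Derive_n u 3 z) by (simpl; field) end.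
  rewrite Rabs_mult. rewrite (Rabs_right ((y - p) ^ 3 / 6)).
  2: { apply Rle_ge. unfold Rdiv. apply Rmult_le_pos. apply pow_le; lra. lra. }
  pose proof (H2 z ltac:(lra)).
  assert (0 <= (y - p) ^ 3 / 6) by (unfold Rdiv; apply Rmult_le_pos; [apply pow_le; lra|lra]).
  replace (K * (y - p) ^ 3 / 6) with ((y - p) ^ 3 / 6 * K) by field.
  apply Rmult_le_compat_l; auto.
Qed.

Lemma taylor2d u T K p y : Hyp3 u T K -> 0 <= p -> p < y -> y <= T ->
  Rabs (Derive u y - Derive u p - (y - p) * Derive_n u 2 p) <= K * (y - p) ^ 2 / 2.
Proof.
  intros [H1 H2] Hp Hpy HyT.
  destruct (Taylor_Lagrange (Derive u) 1 p y Hpy) as [z [Hz E]].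
  { intros t Ht k Hk.
    destruct k as [|[|[|k]]]; simpl; auto; try lia.
    - exact (H1 t ltac:(lra) 2%nat ltac:(lia)).
    - exact (H1 t ltac:(lra) 3%nat ltac:(lia)). }
  rewrite E. simpl sum_f_R0.
  change (Derive_n (Derive u) 0 p) with (Derive u p).
  change (Derive_n (Derive u) 1 p) with (Derive_n u 2 p).
  change (Derive_n (Derive u) 2 z) with (Derive_n u 3 z).
  replace (INR (Factorial.fact 2)) with 2 by (simpl; lra).
  replace (INR (Factorial.fact 1)) with 1 by (simpl; lra).
  replace (INR (Factorial.fact 0)) with 1 by (simpl; lra).
  change (Derive (fun x : R => Derive u x) p) with (Derive_n u 2 p).
  match goal with |- Rabs ?e <= _ => replace e with ((y - p) ^ 2 / 2 * Derive_n u 3 z) by (simpl; field) end.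
  rewrite Rabs_mult. rewrite (Rabs_right ((y - p) ^ 2 / 2)).
  2: { apply Rle_ge. unfold Rdiv. apply Rmult_le_pos. apply pow_le; lra. lra. }
  pose proof (H2 z ltac:(lra)).
  assert (0 <= (y - p) ^ 2 / 2) by (unfold Rdiv; apply Rmult_le_pos; [apply pow_le; lra|lra]).
  replace (K * (y - p) ^ 2 / 2) with ((y - p) ^ 2 / 2 * K) by field.
  apply Rmult_le_compat_l; auto.
Qed.

Lemma eprime_bound u T K p tau eta : Hyp3 u T K -> 0 <= p -> 0 < tau -> p + 2 * tau <= T ->
  p <= eta <= p + 2 * tau ->
  Rabs (Derive u eta - ((u (p + tau) - u p) / tau
          + (u (p + 2 * tau) - 2 * u (p + tau) + u p) / (tau * tau) * (eta - p - tau / 2)))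
    <= 5 * K * (tau * tau).
Proof.
  intros H Hp Ht HT He.
  assert (HK : 0 <= K).
  { destruct H as [_ H2]. pose proof (H2 p ltac:(lra)). pose proof (Rabs_pos (Derive_n u 3 p)). lra. }
  pose proof (taylor3 u T K p (p + tau) H Hp ltac:(lra) ltac:(lra)) as T1.
  pose proof (taylor3 u T K p (p + 2 * tau) H Hp ltac:(lra) ltac:(lra)) as T2.
  replace (p + tau - p) with tau in T1 by ring.
  replace (p + 2 * tau - p) with (2 * tau) in T2 by ring.
  set (R1 := u (p + tau) - u p - tau * Derive u p - tau ^ 2 / 2 * Derive_n u 2 p) in T1.
  set (R2 := u (p + 2 * tau) - u p - 2 * tau * Derive u p - (2 * tau) ^ 2 / 2 * Derive_n u 2 p) in T2.
  set (h := eta - p).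
  assert (T3 : Rabs (Derive u eta - Derive u p - h * Derive_n u 2 p) <= 2 * K * (tau * tau)).
  { destruct (Rle_lt_dec eta p).
    - assert (eta = p) by lra. subst h. replace (eta - p) with 0 by lra.
      replace (Derive u eta - Derive u p - 0 * Derive_n u 2 p) with 0 by (subst eta; ring).
      rewrite Rabs_R0. nra.
    - eapply Rle_trans. apply (taylor2d u T K p eta H Hp r ltac:(lra)).
      fold h. assert (0 <= h <= 2 * tau) by (unfold h; lra).
      assert (h * h <= (2 * tau) * (2 * tau)) by (apply Rmult_le_compat; lra). simpl. nra. }
  set (R3 := Derive u eta - Derive u p - h * Derive_n u 2 p) in T3.
  assert (E : Derive u eta - ((u (p + tau) - u p) / tau
          + (u (p + 2 * tau) - 2 * u (p + tau) + u p) / (tau * tau) * (h - tau / 2))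
          = R3 - R1 / tau - (R2 - 2 * R1) * (h - tau / 2) / (tau * tau)).
  { unfold R1, R2, R3, h. field. lra. }
  rewrite E.
  assert (Hh : Rabs (h - tau / 2) <= 3 / 2 * tau) by (apply Rabs_le; unfold h; lra).
  assert (A1 : Rabs (R1 / tau) <= K * (tau * tau) / 6).
  { unfold Rdiv. rewrite Rabs_mult, Rabs_inv, (Rabs_right tau) by lra.
    apply Rmult_le_reg_r with tau; auto. rewrite Rmult_assoc, Rinv_l by lra.
    simpl in T1. nra. }
  assert (A2 : Rabs ((R2 - 2 * R1) * (h - tau / 2) / (tau * tau)) <= 5 / 2 * K * (tau * tau)).
  { unfold Rdiv. rewrite !Rabs_mult, Rabs_inv, (Rabs_right (tau * tau)) by nra.
    assert (Rabs (R2 - 2 * R1) <= 10 / 6 * K * tau ^ 3).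
    { eapply Rle_trans. apply Rabs_triang. rewrite Rabs_Ropp, Rabs_mult, (Rabs_right 2) by lra.
      assert (K * (2 * tau) ^ 3 / 6 = 8 * (K * tau ^ 3) / 6) by field. lra. }
    apply Rmult_le_reg_r with (tau * tau); [nra|]. rewrite Rmult_assoc, Rinv_l, Rmult_1_r by nra.
    assert (0 <= Rabs (R2 - 2 * R1)) by apply Rabs_pos.
    assert (0 <= Rabs (h - tau / 2)) by apply Rabs_pos.
    apply Rle_trans with ((10 / 6 * K * tau ^ 3) * (3 / 2 * tau)).
    apply Rmult_le_compat; auto. simpl. nra. }
  eapply Rle_trans. apply Rabs_triang.
  eapply Rle_trans. apply Rplus_le_compat_r. apply Rabs_triang.
  rewrite !Rabs_Ropp. assert (0 <= K * (tau * tau)) by (apply Rmult_le_pos; nra). lra.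
Qed.

Lemma is_RInt_plusR (f g : R -> R) a b l1 l2 : is_RInt f a b l1 -> is_RInt g a b l2 ->
  is_RInt (fun x => f x + g x) a b (l1 + l2).
Proof. intros H1 H2. exact (is_RInt_plus f g a b l1 l2 H1 H2). Qed.

Lemma is_RInt_scalR (f : R -> R) a b c l : is_RInt f a b l ->
  is_RInt (fun x => c * f x) a b (c * l).
Proof. intros H. exact (is_RInt_scal f a b c l H). Qed.

Lemma is_RInt_extR (f g : R -> R) a b l : a <= b -> (forall x, a <= x <= b -> f x = g x) ->
  is_RInt f a b l -> is_RInt g a b l.
Proof.
  intros Hab E H. apply (is_RInt_ext f); auto.
  intros x Hx. rewrite Rmin_left, Rmax_right in Hx by lra. apply E; lra.
Qed.

Lemma RInt_isR (f : R -> R) a b l : is_RInt f a b l -> RInt f a b = l.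
Proof. intros H. exact (is_RInt_unique f a b l H). Qed.

Lemma Rlem1 (V k0 P1 P0 : R) : V + k0 * 0 + (P1 - P0) - (P1 - P0) = V.
Proof. ring. Qed.

Lemma interval_err (u : R -> R) al t x0 tau A D M :
  0 < al < 1 -> 0 < tau -> x0 + tau < t ->
  A = (u (x0 + tau) - u x0) / tau ->
  (forall x, x0 <= x <= x0 + tau -> ex_derive u x /\ continuous (Derive u) x) ->
  (forall x, x0 <= x <= x0 + tau -> Rabs (Derive u x - (A + D * (x - (x0 + tau / 2)))) <= M) ->
  Rabs (RInt (fun x => Derive u x * Rpower (t - x) (- al)) x0 (x0 + tau)
        - (PhiR al t A D (x0 + tau / 2) (x0 + tau) - PhiR al t A D (x0 + tau / 2) x0))
    <= M * tau * (Rpower (t - (x0 + tau)) (- al) - Rpower (t - x0) (- al)).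
Proof.
  intros Hal Htau Ht HA Hu HM.
  set (m := x0 + tau / 2). set (x1 := x0 + tau).
  set (k := fun x => Rpower (t - x) (- al)).
  set (k0 := k x0).
  set (g := fun x => Derive u x - (A + D * (x - m))).
  assert (Cg : forall x, x0 <= x <= x1 -> continuous g x).
  { intros x Hx. unfold g. apply cont_minus. apply Hu; unfold x1 in Hx; lra. apply cont_affine. }
  assert (Ck : forall x, x0 <= x <= x1 -> continuous k x).
  { intros x Hx. unfold k. apply cont_Rpower_sub. unfold x1 in Hx; lra. }
  assert (Ig : is_RInt g x0 x1 0).
  { set (e := fun x => u x - (A * x + D * (x - m) ^ 2 / 2)).
    replace 0 with (minus (e x1) (e x0)).
    2: { unfold e, minus, plus, opp; simpl. unfold x1, m. rewrite HA. field. lra. }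
    apply (@is_RInt_derive R_CompleteNormedModule).
    - intros x Hx. rewrite Rmin_left, Rmax_right in Hx by (unfold x1; lra).
      unfold e, g.
      destruct (Hu x ltac:(unfold x1 in Hx; lra)) as [Hd _].
      pose proof (Derive_correct u x Hd) as D1.
      assert (D2 : is_derive (fun x => A * x + D * (x - m) ^ 2 / 2) x (A + D * (x - m))).
      { auto_derive; auto. simpl. field. }
      pose proof (is_derive_minus _ _ x _ _ D1 D2) as D3.
      apply (is_derive_eq _ _ _ _ _ D3). intro; reflexivity.
      unfold minus, plus, opp; simpl. ring.
    - intros x Hx. rewrite Rmin_left, Rmax_right in Hx by (unfold x1; lra). apply Cg; auto. }
  assert (Ex1 : ex_RInt (fun x => g x * (k x - k0)) x0 x1).
  { apply ex_RInt_cont; [unfold x1; lra|]. intros x Hx.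
    apply cont_mul. apply Cg; auto. apply cont_minus. apply Ck; auto. apply cont_const. }
  set (V := RInt (fun x => g x * (k x - k0)) x0 x1).
  assert (IV : is_RInt (fun x => g x * (k x - k0)) x0 x1 V) by (apply (RInt_correct _ _ _ Ex1)).
  pose proof (is_RInt_scalR _ _ _ k0 _ Ig) as I2.
  pose proof (PhiR_int al t A D m x0 x1 Hal ltac:(unfold x1; lra) ltac:(unfold x1; lra)) as I3.
  pose proof (is_RInt_plusR _ _ _ _ _ _ (is_RInt_plusR _ _ _ _ _ _ IV I2) I3) as I4.
  assert (I5 : is_RInt (fun x => Derive u x * k x) x0 x1
                 (V + k0 * 0 + (PhiR al t A D m x1 - PhiR al t A D m x0))).
  { eapply is_RInt_extR; [unfold x1; lra| |exact I4].
    intros x Hx. unfold g, k0, k. ring. }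
  change (RInt (fun x => Derive u x * Rpower (t - x) (- al)) x0 x1) with (RInt (fun x => Derive u x * k x) x0 x1).
  rewrite (RInt_isR _ _ _ _ I5).

  rewrite (Rlem1 V k0 (PhiR al t A D m x1) (PhiR al t A D m x0)).
  unfold V.
  replace (M * tau * (Rpower (t - x1) (- al) - Rpower (t - x0) (- al)))
    with ((x1 - x0) * (M * (k x1 - k0))) by (unfold x1, k0, k; ring).
  apply abs_RInt_le_const; [unfold x1; lra|exact Ex1|].
  intros x Hx.
  rewrite Rabs_mult.
  assert (K1 : k0 <= k x) by (unfold k0, k; apply kern_mono; unfold x1 in *; lra).
  assert (K2 : k x <= k x1) by (unfold k; apply kern_mono; unfold x1 in *; lra).
  rewrite (Rabs_right (k x - k0)) by lra.
  apply Rmult_le_compat; try lra. apply Rabs_pos. apply HM; unfold x1 in Hx; lra.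
Qed.

Lemma Rlem2 (V P1 P0 : R) : V + (P1 - P0) - P1 - (0 - P0) = V.
Proof. ring. Qed.

Lemma last_err (u : R -> R) al x0 tau A D M :
  0 < al < 1 -> 0 < tau -> 0 <= M ->
  A = (u (x0 + tau) - u x0) / tau ->
  (forall x, x0 <= x <= x0 + tau -> ex_derive u x /\ continuous (Derive u) x) ->
  (forall x, x0 <= x <= x0 + tau -> Rabs (Derive u x - (A + D * (x - (x0 + tau / 2)))) <= M) ->
  exists L,
    filterlim (fun b => RInt (fun x => Derive u x * Rpower (x0 + tau - x) (- al)) x0 b)
      (at_left (x0 + tau)) (locally L) /\
    Rabs (L - (0 - PhiR al (x0 + tau) A D (x0 + tau / 2) x0)) <= M * Rpower tau (1 - al) / (1 - al).
Proof.
  intros Hal Htau HM0 HA Hu HM.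
  set (t := x0 + tau). set (m := x0 + tau / 2).
  set (k := fun x => Rpower (t - x) (- al)).
  set (g := fun x => Derive u x - (A + D * (x - m))).
  set (f := fun x => Derive u x * k x).
  assert (Cf : forall x, x0 <= x < t -> continuous f x).
  { intros x Hx. unfold f. apply cont_mul. apply Hu; unfold t in Hx; lra.
    unfold k. apply cont_Rpower_sub; lra. }
  destruct (improper_left f x0 t al (M + Rabs A + Rabs D * tau) Hal ltac:(unfold t; lra)) as [L HL].
  { pose proof (Rabs_pos A). pose proof (Rabs_pos D). nra. }
  { exact Cf. }
  { intros x Hx. unfold f. rewrite Rabs_mult.
    unfold k. rewrite (Rabs_right (Rpower (t - x) (- al))) by (apply Rle_ge, Rlt_le, Rpower_pos).
    apply Rmult_le_compat_r. apply Rlt_le, Rpower_pos.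
    pose proof (HM x ltac:(unfold t in Hx; lra)) as H1. fold m in H1.
    assert (H2 : Rabs (x - m) <= tau) by (apply Rabs_le; unfold m, t in *; lra).
    assert (H3 : Rabs (A + D * (x - m)) <= Rabs A + Rabs D * tau).
    { eapply Rle_trans. apply Rabs_triang. rewrite Rabs_mult.
      pose proof (Rabs_pos D). apply Rplus_le_compat_l. apply Rmult_le_compat_l; auto. }
    replace (Derive u x) with ((Derive u x - (A + D * (x - m))) + (A + D * (x - m))) by ring.
    eapply Rle_trans. apply Rabs_triang. lra. }
  exists L. split. exact HL.
  apply (lim_bound (at_left t) (fun b => RInt f x0 b) (PhiR al t A D m)); auto.
  - apply PhiR_lim; auto.
  - exists (mkposreal _ Htau). intros b Hb Hbt. apply ball_R in Hb.
    change (Rabs (b - t) < tau) in Hb. rewrite Rabs_left in Hb by lra.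
    assert (Hb0 : x0 < b < t) by (unfold t in *; lra).
    assert (Ex1 : ex_RInt (fun x => g x * k x) x0 b).
    { apply ex_RInt_cont; [lra|]. intros x Hx. apply cont_mul.
      unfold g. apply cont_minus. apply Hu; unfold t in *; lra. apply cont_affine.
      unfold k. apply cont_Rpower_sub; lra. }
    pose proof (RInt_correct _ _ _ Ex1) as I1.
    pose proof (PhiR_int al t A D m x0 b Hal ltac:(lra) ltac:(lra)) as I2.
    pose proof (is_RInt_plusR _ _ _ _ _ _ I1 I2) as I3.
    assert (I4 : is_RInt f x0 b (RInt (fun x => g x * k x) x0 b + (PhiR al t A D m b - PhiR al t A D m x0))).
    { eapply is_RInt_extR; [lra| |exact I3]. intros x Hx. unfold f, g, k. ring. }
    rewrite (RInt_isR _ _ _ _ I4).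
    rewrite Rlem2.
    eapply Rle_trans.
    { apply (int_bound_kern (fun x => g x * k x) t al M x0 b Hal ltac:(lra) ltac:(lra)).
      - intros x Hx. apply cont_mul. unfold g. apply cont_minus. apply Hu; unfold t in *; lra.
        apply cont_affine. unfold k. apply cont_Rpower_sub; lra.
      - intros x Hx. rewrite Rabs_mult. unfold k.
        rewrite (Rabs_right (Rpower (t - x) (- al))) by (apply Rle_ge, Rlt_le, Rpower_pos).
        apply Rmult_le_compat_r. apply Rlt_le, Rpower_pos. apply HM; unfold t in *; lra. }
    replace (t - x0) with tau by (unfold t; ring).
    pose proof (Rpower_pos (t - b) (1 - al)).
    unfold Rdiv. rewrite Rmult_assoc. apply Rmult_le_compat_l; auto.
    apply Rmult_le_compat_r. apply Rlt_le, Rinv_0_lt_compat; lra. lra.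
Qed.

Lemma rpow_pos_eq x p : 0 < x -> rpow x p = Rpower x p.
Proof. intro H. unfold rpow. destruct (Rle_dec x 0); [lra|auto]. Qed.

Lemma rpow_0 p : rpow 0 p = 0.
Proof. unfold rpow. destruct (Rle_dec 0 0); [auto|lra]. Qed.

Lemma rpow_mul tau y p : 0 < tau -> 0 <= y -> rpow (tau * y) p = Rpower tau p * rpow y p.
Proof.
  intros Ht Hy. destruct (Req_dec y 0) as [->|Hy0].
  - rewrite Rmult_0_r, rpow_0. ring.
  - rewrite !rpow_pos_eq by nra. rewrite Rpower_mult_distr by lra. auto.
Qed.

Lemma rpow_succ y q : 0 <= y -> rpow y (q + 1) = y * rpow y q.
Proof.
  intros Hy. destruct (Req_dec y 0) as [->|Hy0].
  - rewrite !rpow_0. ring.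
  - rewrite !rpow_pos_eq by lra. apply Rpower_succ; lra.
Qed.

Definition psi (al t A D m y : R) : R :=
  - (A + D * (t - m)) * rpow y (1 - al) / (1 - al) + D * rpow y (2 - al) / (2 - al).

Lemma PhiR_psi al t A D m x : x < t -> PhiR al t A D m x = psi al t A D m (t - x).
Proof. intro H. unfold PhiR, psi. rewrite !rpow_pos_eq by lra. reflexivity. Qed.

Lemma psi_val al x0 tau l A D : 0 < al < 1 -> 0 < tau ->
  let t := x0 + tau * (INR l + 1) in
  psi al t A D (x0 + tau / 2) (tau * INR l) - psi al t A D (x0 + tau / 2) (tau * (INR l + 1))
  = Rpower tau (1 - al) / (1 - al) * (a_coef al l * A + b_coef al l * (D * tau)).
Proof.
  intros Hal Ht t. unfold psi, a_coef, b_coef, t.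
  assert (Hl := pos_INR l).
  replace (2 - al) with ((1 - al) + 1) by ring.
  rewrite !rpow_mul by lra.
  rewrite !rpow_succ by lra.
  rewrite (Rpower_succ tau) by lra.
  field. lra.
Qed.

Definition c_gen (a b : nat -> R) (j s : nat) : R :=
  match j with
  | 0%nat => a 0%nat
  | 1%nat => if Nat.eqb s 0 then a 0%nat + b 0%nat + b 1%nat
             else a 1%nat - b 1%nat - b 0%nat
  | 2%nat => if Nat.eqb s 0 then a 0%nat + b 0%nat
             else if Nat.eqb s 1 then a 1%nat + b 1%nat + b 2%nat - b 0%nat
             else a 2%nat - b 2%nat - b 1%nat
  | _ => if Nat.eqb s 0 then a 0%nat + b 0%nat
         else if Nat.leb s (j - 2) then a s + b s - b (s - 1)%nat
         else if Nat.eqb s (j - 1) then a (j - 1)%nat + b (j - 1)%nat + b j - b (j - 2)%nat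
         else a j - b j - b (j - 1)%nat
  end.

Lemma c_coef_gen al j s : c_coef al j s = c_gen (a_coef al) (b_coef al) j s.
Proof. reflexivity. Qed.

Definition gam (b : nat -> R) (j s : nat) : R :=
  (if Nat.eqb s 0 then - b j else 0) + (if Nat.eqb s 1 then b j else 0)
  + (if Nat.leb 1 s then b (j - s)%nat else 0)
  - (if Nat.leb s (j - 1) then b (j - s - 1)%nat else 0).

Lemma c_gen_ge3 a b j s : (3 <= j)%nat ->
  c_gen a b j s = if Nat.eqb s 0 then a 0%nat + b 0%nat
         else if Nat.leb s (j - 2) then a s + b s - b (s - 1)%nat
         else if Nat.eqb s (j - 1) then a (j - 1)%nat + b (j - 1)%nat + b j - b (j - 2)%nat
         else a j - b j - b (j - 1)%nat.
Proof. intros H. destruct j as [|[|[|j']]]; try lia. reflexivity. Qed.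

Ltac cl := repeat (first [change (Nat.leb 1 0) with false | change (Nat.eqb 0 1) with false
  | change (Nat.eqb 1 0) with false | change (Nat.eqb 1 1) with true | change (Nat.leb 1 1) with true
  | change (Nat.eqb 0 0) with true]); cbv iota.

Lemma c_gen_coef a b j s : (1 <= j)%nat -> (s <= j)%nat ->
  c_gen a b j (j - s) = a (j - s)%nat + gam b j s.
Proof.
  intros Hj Hs. unfold gam.
  destruct j as [|[|[|j']]]; [lia| | |].
  - destruct s as [|[|s]]; [| |lia]; simpl; ring.
  - destruct s as [|[|[|s]]]; [| | |lia]; simpl; ring.
  - assert (Hj3 : (3 <= S (S (S j')))%nat) by lia.
    revert Hj3 Hs. generalize (S (S (S j'))). clear Hj. intros j Hj3 Hs.
    rewrite c_gen_ge3 by lia.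
    destruct (Nat.eqb_spec s 0) as [->|H0].
    + rewrite !Nat.sub_0_r. simpl Nat.eqb.
      replace (Nat.eqb j 0) with false by (symmetry; apply Nat.eqb_neq; lia).
      replace (Nat.leb j (j - 2)) with false by (symmetry; apply Nat.leb_gt; lia).
      replace (Nat.eqb j (j - 1)) with false by (symmetry; apply Nat.eqb_neq; lia).
      replace (Nat.leb 0 (j - 1)) with true by (symmetry; apply Nat.leb_le; lia).
      cl; ring.
    + destruct (Nat.eqb_spec s 1) as [->|H1].
      * replace (Nat.eqb (j - 1) 0) with false by (symmetry; apply Nat.eqb_neq; lia).
        replace (Nat.leb (j - 1) (j - 2)) with false by (symmetry; apply Nat.leb_gt; lia).
        replace (Nat.eqb (j - 1) (j - 1)) with true by (symmetry; apply Nat.eqb_eq; lia).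
        replace (Nat.leb 1 1) with true by reflexivity.
        replace (Nat.leb 1 (j - 1)) with true by (symmetry; apply Nat.leb_le; lia).
        replace (j - 1 - 1)%nat with (j - 2)%nat by lia.
        cl; ring.
      * destruct (Nat.eq_dec s j) as [->|Hsj].
        -- rewrite Nat.sub_diag. simpl Nat.eqb at 1.
           replace (Nat.leb 1 j) with true by (symmetry; apply Nat.leb_le; lia).
           replace (Nat.leb j (j - 1)) with false by (symmetry; apply Nat.leb_gt; lia).
           replace (Nat.eqb j 0) with false by (symmetry; apply Nat.eqb_neq; lia).
           replace (Nat.eqb j 1) with false by (symmetry; apply Nat.eqb_neq; lia).
           cl; ring.
        -- replace (Nat.eqb (j - s) 0) with false by (symmetry; apply Nat.eqb_neq; lia).
           replace (Nat.leb (j - s) (j - 2)) with true by (symmetry; apply Nat.leb_le; lia).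
           replace (Nat.leb 1 s) with true by (symmetry; apply Nat.leb_le; lia).
           replace (Nat.leb s (j - 1)) with true by (symmetry; apply Nat.leb_le; lia).
           replace (Nat.eqb s 0) with false by (symmetry; apply Nat.eqb_neq; lia).
           replace (Nat.eqb s 1) with false by (symmetry; apply Nat.eqb_neq; lia).
           replace (j - s - 1)%nat with (j - s - 1)%nat by lia.
           cl; ring.
Qed.

Definition dd (d : nat -> R) (k : nat) : R :=
  match k with 0%nat => d 1%nat - d 0%nat | S k' => d (S k') - d k' end.

Lemma sum_single (f : nat -> R) n i : (i <= n)%nat -> (forall k, k <> i -> f k = 0) ->
  sum_f_R0 f n = f i.
Proof.
  intros Hi Hf. induction n.
  - simpl. assert (i = 0%nat) by lia. subst; auto.
  - simpl. destruct (Nat.eq_dec i (S n)) as [->|Hne].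
    + rewrite (sum_eq_R0 f n). ring. intros k Hk. apply Hf. lia.
    + rewrite IHn by lia. rewrite (Hf (S n)) by lia. ring.
Qed.

Lemma sum_ident a b d j : (1 <= j)%nat ->
  sum_f_R0 (fun s => c_gen a b j (j - s) * d s) j =
  sum_f_R0 (fun k => a (j - k)%nat * d k + b (j - k)%nat * dd d k) j.
Proof.
  intros Hj.
  rewrite (sum_eq _ (fun s => a (j - s)%nat * d s + gam b j s * d s)).
  2: { intros s Hs. rewrite c_gen_coef by lia. ring. }
  rewrite !plus_sum. f_equal.
  unfold gam.
  rewrite (sum_eq _ (fun s => ((if Nat.eqb s 0 then - b j * d s else 0) + (if Nat.eqb s 1 then b j * d s else 0))
      + (if Nat.leb 1 s then b (j - s)%nat * d s else 0)
      - (if Nat.leb s (j - 1) then b (j - s - 1)%nat * d s else 0))).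
  2: { intros s Hs. destruct (Nat.eqb s 0), (Nat.eqb s 1), (Nat.leb 1 s), (Nat.leb s (j - 1)); ring. }
  rewrite (sum_eq (fun k => b (j - k)%nat * dd d k)
      (fun k => (if Nat.eqb k 0 then b j * (d 1%nat - d 0%nat) else 0)
      + (if Nat.leb 1 k then b (j - k)%nat * d k else 0)
      - (if Nat.leb 1 k then b (j - k)%nat * d (k - 1)%nat else 0))).
  2: { intros k Hk. destruct k as [|k]; simpl.
       - rewrite Nat.sub_0_r. ring.
       - rewrite Nat.sub_0_r. ring. }
  rewrite !minus_sum, !plus_sum.
  assert (E1 : sum_f_R0 (fun s => if Nat.eqb s 0 then - b j * d s else 0) j + sum_f_R0 (fun s => if Nat.eqb s 1 then b j * d s else 0) j
             = sum_f_R0 (fun k => if Nat.eqb k 0 then b j * (d 1%nat - d 0%nat) else 0) j).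
  {
    rewrite (sum_single _ j 0) by (lia || (intros k Hk; destruct (Nat.eqb_spec k 0); [lia|auto])).
    rewrite (sum_single (fun s => if Nat.eqb s 1 then b j * d s else 0) j 1) by (lia || (intros k Hk; destruct (Nat.eqb_spec k 1); [lia|auto])).
    rewrite (sum_single _ j 0) by (lia || (intros k Hk; destruct (Nat.eqb_spec k 0); [lia|auto])).
    simpl. ring. }
  assert (E2 : sum_f_R0 (fun s => if Nat.leb s (j - 1) then b (j - s - 1)%nat * d s else 0) j
             = sum_f_R0 (fun k => if Nat.leb 1 k then b (j - k)%nat * d (k - 1)%nat else 0) j).
  { destruct j as [|j']; [lia|].
    rewrite tech5. rewrite (decomp_sum _ (S j')) by lia. simpl pred.
    replace (Nat.leb (S j') (S j' - 1)) with false by (symmetry; apply Nat.leb_gt; lia).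
    simpl Nat.leb at 2. rewrite Rplus_0_r, Rplus_0_l.
    apply sum_eq. intros i Hi.
    replace (Nat.leb i (S j' - 1)) with true by (symmetry; apply Nat.leb_le; lia).
    replace (S i - 1)%nat with i by lia.
    replace (S j' - i - 1)%nat with (S j' - S i)%nat by lia.
    reflexivity. }
  rewrite E1, E2. ring.
Qed.

Definition dlt (u : R -> R) (tau : R) (s : nat) : R := (u (INR (s + 1) * tau) - u (INR s * tau)) / tau.

Lemma INR_S_tau k tau : INR (k + 1) * tau = INR k * tau + tau.
Proof. rewrite plus_INR. simpl. ring. Qed.

Lemma interval_data u T K tau k : Hyp3 u T K -> 0 < tau -> (1 <= k + 1)%nat ->
  2 * tau <= T -> INR (k + 1) * tau <= T ->
  forall x, INR k * tau <= x <= INR k * tau + tau ->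
  Rabs (Derive u x - (dlt u tau k + dd (dlt u tau) k / tau * (x - (INR k * tau + tau / 2))))
    <= 5 * K * (tau * tau).
Proof.
  intros H Ht _ H2 Hk x Hx.
  destruct k as [|k'].
  - pose proof (eprime_bound u T K 0 tau x H ltac:(lra) Ht ltac:(lra) ltac:(simpl in Hx; lra)) as E.
    unfold dd, dlt. simpl (INR (0 + 1)). simpl (INR (1 + 1)). simpl (INR 0).
    replace (0 * tau) with 0 by ring. replace (INR 1 * tau) with (0 + tau) by (simpl; ring). replace (1 * tau) with (0 + tau) by ring.
    replace ((1 + 1) * tau) with (0 + 2 * tau) by ring.
    match goal with |- Rabs ?e <= _ => match type of E with Rabs ?e' <= _ =>
      replace e with e' by (field; lra) end end.
    exact E.
  - set (p := INR k' * tau).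
    assert (Hp0 : 0 <= p) by (unfold p; apply Rmult_le_pos; [apply pos_INR|lra]).
    assert (E1 : INR (S k') * tau = p + tau) by (unfold p; rewrite S_INR; ring).
    assert (E2 : INR (S k' + 1) * tau = p + 2 * tau) by (unfold p; rewrite plus_INR, S_INR; simpl; ring).
    assert (E0 : INR (k' + 1) * tau = p + tau) by (unfold p; rewrite plus_INR; simpl; ring).
    rewrite E1 in Hx. rewrite E2 in Hk.
    pose proof (eprime_bound u T K p tau x H Hp0 Ht Hk ltac:(lra)) as E.
    unfold dd, dlt. replace (S k' + 1)%nat with (S (S k')) by lia.
    rewrite <- (Nat.add_1_r (S k')), <- (Nat.add_1_r k').
    assert (E3 : INR (k' + 1 + 1) * tau = p + 2 * tau) by (unfold p; rewrite !plus_INR; simpl; ring).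
    rewrite E3, E0.
    fold p. change (INR k' * tau) with p.
    match goal with |- Rabs ?e <= _ => match type of E with Rabs ?e' <= _ =>
      replace e with e' by (field; lra) end end.
    exact E.
Qed.

Definition Pk (u : R -> R) al tau j k : R :=
  Rpower tau (1 - al) / (1 - al) *
  (a_coef al (j - k) * dlt u tau k + b_coef al (j - k) * dd (dlt u tau) k).

Definition DerHyp (u : R -> R) T : Prop :=
  forall x, 0 <= x <= T -> ex_derive u x /\ continuous (Derive u) x.

Lemma Pk_psi u al tau j k A D : 0 < al < 1 -> 0 < tau -> (k <= j)%nat ->
  A = dlt u tau k -> D = dd (dlt u tau) k / tau ->
  psi al (INR (j + 1) * tau) A D (INR k * tau + tau / 2) (tau * INR (j - k))
  - psi al (INR (j + 1) * tau) A D (INR k * tau + tau / 2) (tau * (INR (j - k) + 1))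
  = Pk u al tau j k.
Proof.
  intros Hal Ht Hk HA HD.
  replace (INR (j + 1) * tau) with (INR k * tau + tau * (INR (j - k) + 1)).
  2: { rewrite minus_INR by lia. rewrite plus_INR. simpl. ring. }
  rewrite psi_val by auto. unfold Pk. rewrite HA, HD. field. lra.
Qed.

Lemma interval_P u T K al tau j k : Hyp3 u T K -> DerHyp u T -> 0 < al < 1 -> 0 < tau ->
  2 * tau <= T -> INR (j + 1) * tau <= T -> (k + 1 <= j)%nat ->
  Rabs (RInt (fun x => Derive u x * Rpower (INR (j + 1) * tau - x) (- al)) (INR k * tau) (INR (k + 1) * tau)
        - Pk u al tau j k)
  <= 5 * K * (tau * tau) * tau * (Rpower (INR (j + 1) * tau - INR (k + 1) * tau) (- al)
                                  - Rpower (INR (j + 1) * tau - INR k * tau) (- al)).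
Proof.
  intros H HD Hal Ht H2 HT Hk.
  assert (Hk1 : INR (k + 1) * tau <= INR j * tau).
  { apply Rmult_le_compat_r; [lra|]. apply le_INR; lia. }
  assert (Hj1 : INR (j + 1) * tau = INR j * tau + tau) by apply INR_S_tau.
  assert (Hx0 : 0 <= INR k * tau) by (apply Rmult_le_pos; [apply pos_INR|lra]).
  assert (Hk2 : INR (k + 1) * tau = INR k * tau + tau) by apply INR_S_tau.
  rewrite Hk2. rewrite Hk2 in Hk1.
  pose proof (interval_err u al (INR (j + 1) * tau) (INR k * tau) tau (dlt u tau k) (dd (dlt u tau) k / tau)
     (5 * K * (tau * tau)) Hal Ht ltac:(lra)) as IE.
  specialize (IE ltac:(unfold dlt; rewrite INR_S_tau; reflexivity)).
  specialize (IE ltac:(intros x Hx; apply HD; lra)).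
  specialize (IE (interval_data u T K tau k H Ht ltac:(lia) H2 ltac:(lra))).
  rewrite !PhiR_psi in IE by lra.
  replace (INR (j + 1) * tau - (INR k * tau + tau)) with (tau * INR (j - k)) in IE.
  2: { rewrite minus_INR by lia. rewrite Hj1. ring. }
  replace (INR (j + 1) * tau - INR k * tau) with (tau * (INR (j - k) + 1)) in IE.
  2: { rewrite minus_INR by lia. rewrite Hj1. ring. }
  rewrite (Pk_psi u al tau j k) in IE by (auto; lia).
  replace (INR (j + 1) * tau - (INR k * tau + tau)) with (tau * INR (j - k)).
  2: { rewrite minus_INR by lia. rewrite Hj1. ring. }
  replace (INR (j + 1) * tau - INR k * tau) with (tau * (INR (j - k) + 1)).
  2: { rewrite minus_INR by lia. rewrite Hj1. ring. }
  exact IE.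
Qed.

Lemma cont_f u T al t x : DerHyp u T -> 0 <= x <= T -> x < t ->
  continuous (fun x => Derive u x * Rpower (t - x) (- al)) x.
Proof.
  intros HD Hx Hxt. apply cont_mul. apply HD; auto. apply cont_Rpower_sub; auto.
Qed.

Lemma Rlem3 (A B P Q : R) : A + B - (P + Q) = (A - P) + (B - Q).
Proof. ring. Qed.

Lemma proper_sum u T K al tau j n : Hyp3 u T K -> DerHyp u T -> 0 < al < 1 -> 0 < tau ->
  2 * tau <= T -> INR (j + 1) * tau <= T -> (n + 1 <= j)%nat ->
  Rabs (RInt (fun x => Derive u x * Rpower (INR (j + 1) * tau - x) (- al)) 0 (INR (n + 1) * tau)
        - sum_f_R0 (Pk u al tau j) n)
  <= 5 * K * (tau * tau) * tau * (Rpower (INR (j + 1) * tau - INR (n + 1) * tau) (- al)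
                                  - Rpower (INR (j + 1) * tau - 0) (- al)).
Proof.
  intros H HD Hal Ht H2 HT.
  induction n as [|n IH]; intros Hn.
  - pose proof (interval_P u T K al tau j 0 H HD Hal Ht H2 HT Hn) as P.
    simpl (INR 0) in P. rewrite Rmult_0_l in P. simpl sum_f_R0. exact P.
  - assert (HK : 0 <= K).
    { destruct H as [_ Hb]. pose proof (Hb 0 ltac:(lra)). pose proof (Rabs_pos (Derive_n u 3 0)). lra. }
    specialize (IH ltac:(lia)).
    pose proof (interval_P u T K al tau j (S n) H HD Hal Ht H2 HT Hn) as P.
    set (f := fun x => Derive u x * Rpower (INR (j + 1) * tau - x) (- al)) in *.
    assert (Hn1 : INR (S n + 1) * tau <= INR j * tau).
    { apply Rmult_le_compat_r; [lra|]. apply le_INR; lia. }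
    assert (Hj1 : INR (j + 1) * tau = INR j * tau + tau) by apply INR_S_tau.
    assert (Hn2 : INR (n + 1) * tau = INR (S n) * tau) by (f_equal; f_equal; lia).
    assert (Hn3 : INR (S n) * tau + tau = INR (S n + 1) * tau) by (symmetry; apply INR_S_tau).
    assert (Hp : 0 <= INR (S n) * tau) by (apply Rmult_le_pos; [apply pos_INR|lra]).
    assert (E : RInt f 0 (INR (S n + 1) * tau) = RInt f 0 (INR (n + 1) * tau) + RInt f (INR (S n) * tau) (INR (S n + 1) * tau)).
    { rewrite Hn2. rewrite <- (RInt_Chasles f 0 (INR (S n) * tau) (INR (S n + 1) * tau)). reflexivity.
      - apply ex_RInt_cont; [lra|]. intros x Hx. apply (cont_f u T); [exact HD|lra|lra].
      - apply ex_RInt_cont; [lra|]. intros x Hx. apply (cont_f u T); [exact HD|lra|lra]. }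
    rewrite E. rewrite tech5.
    rewrite Rlem3.
    eapply Rle_trans. apply Rabs_triang.
    eapply Rle_trans. apply Rplus_le_compat; [exact IH|exact P].
    rewrite Hn2. right. ring.
Qed.

Lemma sumP_ident u al tau j : (1 <= j)%nat -> 0 < al < 1 ->
  sum_f_R0 (Pk u al tau j) j =
  Rpower tau (1 - al) / (1 - al) *
  sum_f_R0 (fun s => c_coef al j (j - s) * ((u (INR (s + 1) * tau) - u (INR s * tau)) / tau)) j.
Proof.
  intros Hj Hal.
  rewrite (sum_eq (fun s => c_coef al j (j - s) * ((u (INR (s + 1) * tau) - u (INR s * tau)) / tau))
             (fun s => c_gen (a_coef al) (b_coef al) j (j - s) * dlt u tau s)) by (intros; reflexivity).
  rewrite sum_ident by auto.
  rewrite scal_sum. apply sum_eq. intros k Hk. unfold Pk. ring.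
Qed.

Theorem lemma1 :
  forall (alpha : R), 0 < alpha < 1 ->
  forall (K : R), 0 <= K ->
  exists C : R,
  forall (T : R) (M : nat) (u : R -> R),
    0 < T -> (2 <= M)%nat ->
    (* u in C^3[0,T] *)
    (forall x, 0 <= x <= T -> forall k, (k <= 3)%nat -> ex_derive_n u k x) ->
    (forall x, 0 <= x <= T -> continuous (Derive_n u 3) x) ->
    (* K bounds max_[0,T] |u'''| *)
    (forall x, 0 <= x <= T -> Rabs (Derive_n u 3 x) <= K) ->
    forall j : nat, (1 <= j <= M - 1)%nat ->
      let tau := T / INR M in
      Rabs (caputo alpha u (INR (j + 1) * tau) - L2_formula alpha tau u j)
        <= C * Rpower tau (3 - alpha).
Proof.
  intros al Hal K HK.
  exists (5 * K * (1 + / (1 - al)) * Rabs (/ Gamma (1 - al))).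
  intros T M u HT HM Hder Hcont Hbnd j Hj tau.
  assert (HM0 : 2 <= INR M) by (replace 2 with (INR 2) by (simpl; ring); apply le_INR; lia).
  assert (Ht : 0 < tau) by (unfold tau; apply Rdiv_lt_0_compat; lra).
  assert (HTM : INR M * tau = T) by (unfold tau; field; lra).
  assert (H3 : Hyp3 u T K) by (split; auto).
  assert (HD : DerHyp u T).
  { intros x Hx. split.
    - exact (Hder x Hx 1%nat ltac:(lia)).
    - apply (@ex_derive_continuous R_AbsRing R_NormedModule). exact (Hder x Hx 2%nat ltac:(lia)). }
  assert (H2 : 2 * tau <= T) by (rewrite <- HTM; apply Rmult_le_compat_r; lra).
  assert (HjT : INR (j + 1) * tau <= T).
  { rewrite <- HTM. apply Rmult_le_compat_r; [lra|]. apply le_INR; lia. }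
  assert (Hj1 : INR (j + 1) * tau = INR j * tau + tau) by apply INR_S_tau.
  assert (Hxj : 0 <= INR j * tau) by (apply Rmult_le_pos; [apply pos_INR|lra]).
  destruct (last_err u al (INR j * tau) tau (dlt u tau j) (dd (dlt u tau) j / tau) (5 * K * (tau * tau))
              Hal Ht ltac:(nra)) as [L [HL HLb]].
  { unfold dlt. rewrite INR_S_tau. reflexivity. }
  { intros x Hx. apply HD. lra. }
  { apply (interval_data u T K tau j H3 Ht ltac:(lia) H2 HjT). }
  rewrite <- Hj1 in HL, HLb.
  rewrite PhiR_psi in HLb by lra.
  replace (INR (j + 1) * tau - INR j * tau) with (tau * (INR (j - j) + 1)) in HLb
    by (rewrite Nat.sub_diag, Hj1; simpl; ring).
  replace 0 with (psi al (INR (j + 1) * tau) (dlt u tau j) (dd (dlt u tau) j / tau) (INR j * tau + tau / 2) (tau * INR (j - j))) in HLb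
    by (rewrite Nat.sub_diag; unfold psi; simpl; rewrite Rmult_0_r, !rpow_0; field; lra).
  rewrite (Pk_psi u al tau j j) in HLb by (auto; lia).
  pose proof (proper_sum u T K al tau j (j - 1) H3 HD Hal Ht H2 HjT ltac:(lia)) as HP.
  replace (j - 1 + 1)%nat with j in HP by lia.
  set (f := fun x => Derive u x * Rpower (INR (j + 1) * tau - x) (- al)) in *.
  assert (Ex0 : ex_RInt f 0 (INR j * tau)).
  { apply ex_RInt_cont; [lra|]. intros x Hx. apply (cont_f u T); [exact HD|lra|lra]. }
  assert (Gen : is_RInt_gen f (at_point 0) (at_left (INR (j + 1) * tau)) (RInt f 0 (INR j * tau) + L)).
  { eapply (@is_RInt_gen_Chasles R_NormedModule _ _ _ _ f (INR j * tau)).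
    - apply is_RInt_gen_at_point. apply (RInt_correct _ _ _ Ex0).
    - apply gen_of_lim_r; auto. 1: typeclasses eauto.
      exists (mkposreal _ Ht). intros b Hb Hbt. apply ball_R in Hb.
      change (Rabs (b - INR (j + 1) * tau) < tau) in Hb. rewrite Rabs_left in Hb by lra.
      destruct (Rle_dec (INR j * tau) b).
      + apply ex_RInt_cont; [lra|]. intros x Hx. apply (cont_f u T); [exact HD|lra|lra].
      + apply ex_RInt_swap. apply ex_RInt_cont; [lra|]. intros x Hx. apply (cont_f u T); [exact HD|lra|lra]. }
  assert (Cap : caputo al u (INR (j + 1) * tau) = (RInt f 0 (INR j * tau) + L) / Gamma (1 - al)).
  { unfold caputo. fold f. rewrite (is_RInt_gen_unique _ _ Gen). reflexivity. }
  rewrite Cap. unfold L2_formula. rewrite Gamma_rel by auto.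
  set (SS := sum_f_R0 (fun s => c_coef al j (j - s) * ((u (INR (s + 1) * tau) - u (INR s * tau)) / tau)) j).
  pose proof (sumP_ident u al tau j ltac:(lia) Hal) as HX. fold SS in HX.
  replace j with (S (j - 1)) in HX at 2 by lia.
  rewrite tech5 in HX. replace (S (j - 1)) with j in HX by lia.
  set (C0 := RInt f 0 (INR j * tau)) in *.
  set (Q := sum_f_R0 (Pk u al tau j) (j - 1)) in *.
  set (G1 := Gamma (1 - al)).
  assert (Eq : C0 + L - (Q + Pk u al tau j j) = (C0 - Q) + (L - (Pk u al tau j j))) by ring.
  assert (Hmain : (C0 + L) / G1 - Rpower tau (1 - al) / ((1 - al) * G1) * SS
                  = (C0 + L - (Q + Pk u al tau j j)) * / G1).
  { rewrite HX. destruct (Req_dec G1 0) as [E0|E0].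
    - rewrite E0, Rmult_0_r. unfold Rdiv. rewrite Rinv_0. ring.
    - field. split; lra. }
  rewrite Hmain, Eq, Rabs_mult.
  assert (B1 : Rabs (C0 - Q) <= 5 * K * (tau * tau) * tau * Rpower tau (- al)).
  { eapply Rle_trans. exact HP.
    replace (INR (j + 1) * tau - INR j * tau) with tau by lra.
    pose proof (Rpower_pos (INR (j + 1) * tau - 0) (- al)).
    assert (0 <= 5 * K * (tau * tau) * tau).
    { apply Rmult_le_pos; [apply Rmult_le_pos; [lra|apply Rmult_le_pos; lra]|lra]. }
    nra. }
  assert (E3 : Rpower tau (3 - al) = tau * tau * tau * Rpower tau (- al)).
  { replace (3 - al) with (((- al) + 1) + 1 + 1) by ring. rewrite !Rpower_succ by lra. ring. }
  assert (E4 : Rpower tau (3 - al) = tau * tau * Rpower tau (1 - al)).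
  { replace (3 - al) with ((1 - al) + 1 + 1) by ring. rewrite !Rpower_succ by lra. ring. }
  assert (Hab : Rabs (C0 - Q + (L - Pk u al tau j j)) <= 5 * K * (1 + / (1 - al)) * Rpower tau (3 - al)).
  { eapply Rle_trans. apply Rabs_triang.
    replace (5 * K * (1 + / (1 - al)) * Rpower tau (3 - al))
      with (5 * K * Rpower tau (3 - al) + 5 * K * Rpower tau (3 - al) / (1 - al)) by (field; lra).
    rewrite E3 at 1. rewrite E4.
    apply Rplus_le_compat.
    - eapply Rle_trans; [exact B1|]. right; ring.
    - eapply Rle_trans; [exact HLb|]. right; field; lra. }
  pose proof (Rabs_pos (/ G1)).
  rewrite (Rmult_comm (5 * K * (1 + / (1 - al))) (Rabs (/ G1))).
  rewrite Rmult_assoc, (Rmult_comm (Rabs (/ G1))).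
  apply Rmult_le_compat_r; auto.
Qed.
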